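(* Let $L\le\mathrm{Aff}(\mathbb{R}^n)$ be a subgroup whose centralizer in $\mathrm{Aff}(\mathbb{R}^n)$ acts transitively on an open subset $U\subseteq\mathbb{R}^n$. If $L$ preserves $U$, then the action of $L$ on $U$ is proper if and only if $L$ is a closed subgroup of $\mathrm{Aff}(\mathbb{R}^n)$.
   Context: $\mathrm{Aff}(\mathbb{R}^n)$ is the Lie group of affine transformations of $\mathbb{R}^n$. An action of a topological group $L$ on a locally compact Hausdorff space $X$ is proper if for every compact $K\subseteq X$ the set $\{\ell\in L\mid \ell K\cap K\neq\emptyset\}$ is compact. *)

(* Defs.v *)
From Stdlib Require Import Reals List.
From mathcomp Require Import ssreflect ssrfun ssrbool eqtype ssrnat fintype bigop.
Set Implicit Arguments. Unset Strict Implicit.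
Open Scope R_scope.

Definition Vec (n : nat) := 'I_n -> R.

Definition vzero (n : nat) : Vec n := fun _ => 0.
Definition ebasis (n : nat) (j : 'I_n) : Vec n :=
  fun i => if i == j then 1 else 0.

(* sup-norm distance on R^n (induces the Euclidean topology) *)
Definition distV (n : nat) (x y : Vec n) : R :=
  \big[Rmax/0]_(i < n) Rabs (x i - y i).

Definition is_affine_map (n : nat) (f : Vec n -> Vec n) : Prop :=
  exists (A : 'I_n -> 'I_n -> R) (b : Vec n),
    forall x i, f x i = \big[Rplus/0]_(j < n) (A i j * x j) + b i.

Definition Aff (n : nat) (f : Vec n -> Vec n) : Prop :=
  is_affine_map f /\ bijective f.

(* Distance on Aff(R^n): an affine map f is determined (linearly) by the
   points f 0, f e_1, ..., f e_n, i.e. by its coefficients (A, b); this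
   distance induces the usual Lie group topology of Aff(R^n) as a subset
   of R^(n*n) x R^n. *)
Definition distAff (n : nat) (f g : Vec n -> Vec n) : R :=
  Rmax (distV (f (@vzero n)) (g (@vzero n)))
       (\big[Rmax/0]_(j < n) distV (f (ebasis j)) (g (ebasis j))).

Definition open_for (T : Type) (d : T -> T -> R) (O : T -> Prop) : Prop :=
  forall x, O x -> exists eps, eps > 0 /\ forall y, d x y < eps -> O y.

Definition compact_for (T : Type) (d : T -> T -> R) (K : T -> Prop) : Prop :=
  forall (I : Type) (O : I -> T -> Prop),
    (forall i, open_for d (O i)) ->
    (forall x, K x -> exists i, O i x) ->
    exists l : list I, forall x, K x -> exists i, In i l /\ O i x.

Definition aff_subgroup (n : nat) (L : (Vec n -> Vec n) -> Prop) : Prop :=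
  (forall f, L f -> Aff f) /\
  L (fun x => x) /\
  (forall f g, L f -> L g -> L (fun x => f (g x))) /\
  (forall f g, L f -> cancel f g -> cancel g f -> L g).

Definition centralizer (n : nat) (L : (Vec n -> Vec n) -> Prop)
  (g : Vec n -> Vec n) : Prop :=
  Aff g /\ forall f, L f -> forall x, g (f x) = f (g x).

Definition preserves (n : nat) (G : (Vec n -> Vec n) -> Prop) (U : Vec n -> Prop) :=
  forall g x, G g -> U x -> U (g x).

Definition acts_transitively (n : nat) (G : (Vec n -> Vec n) -> Prop)
  (U : Vec n -> Prop) : Prop :=
  preserves G U /\ forall x y, U x -> U y -> exists g, G g /\ g x = y.

Definition closed_in_Aff (n : nat) (L : (Vec n -> Vec n) -> Prop) : Prop :=
  forall g, Aff g ->
    (forall eps, eps > 0 -> exists l, L l /\ distAff g l < eps) -> L g.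

Definition proper_action (n : nat) (L : (Vec n -> Vec n) -> Prop)
  (U : Vec n -> Prop) : Prop :=
  forall K : Vec n -> Prop,
    (forall x, K x -> U x) -> compact_for (@distV n) K ->
    compact_for (@distAff n) (fun l => L l /\ exists x, K x /\ K (l x)).

(* Main.v *)
Require Import Defs.
From HB Require Import structures.
From Stdlib Require Import Reals Lra Lia List ClassicalEpsilon FunctionalExtensionality Classical.
From mathcomp Require Import ssreflect ssrfun ssrbool eqtype ssrnat seq fintype bigop.
Set Implicit Arguments. Unset Strict Implicit.
Open Scope R_scope.

Lemma RplusA' : associative Rplus. Proof. move=> x y z; ring. Qed.
Lemma RmultA' : associative Rmult. Proof. move=> x y z; ring. Qed.
HB.instance Definition _ := Monoid.isComLaw.Build R 0 Rplus RplusA' Rplus_comm Rplus_0_l.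
HB.instance Definition _ := Monoid.isComLaw.Build R 1 Rmult RmultA' Rmult_comm Rmult_1_l.
Lemma Rmul0l' : left_zero 0 Rmult. Proof. move=> x; ring. Qed.
Lemma Rmul0r' : right_zero 0 Rmult. Proof. move=> x; ring. Qed.
HB.instance Definition _ := Monoid.isMulLaw.Build R 0 Rmult Rmul0l' Rmul0r'.
Lemma RDl' : left_distributive Rmult Rplus. Proof. move=> x y z; ring. Qed.
Lemma RDr' : right_distributive Rmult Rplus. Proof. move=> x y z; ring. Qed.
HB.instance Definition _ := Monoid.isAddLaw.Build R Rmult Rplus RDl' RDr'.

Notation SUM n F := (\big[Rplus/0]_(j < n) F j).

Lemma sum_distr n a (F : 'I_n -> R) : a * SUM n F = SUM n (fun j => a * F j).
Proof. exact: big_distrr. Qed.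

Lemma sum_add n (F G : 'I_n -> R) : SUM n (fun j => F j + G j) = SUM n F + SUM n G.
Proof. exact: big_split. Qed.

Lemma sum_ext n (F G : 'I_n -> R) : (forall j, F j = G j) -> SUM n F = SUM n G.
Proof. move=> H; apply: eq_bigr => j _; exact: H. Qed.

Lemma sum_opp n (F : 'I_n -> R) : SUM n (fun j => - F j) = - SUM n F.
Proof.
rewrite (_ : - SUM n F = -1 * SUM n F); last ring.
rewrite sum_distr; apply: sum_ext => j; ring.
Qed.

Notation MAX n F := (\big[Rmax/0]_(j < n) F j).

Lemma max_ub n (F : 'I_n -> R) i : F i <= MAX n F.
Proof.
rewrite /index_enum; unlock => /=.
have : i \in index_enum 'I_n by rewrite mem_index_enum.
rewrite /index_enum; unlock.
elim: (Finite.enum 'I_n) => [//|a r IH] /=.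
rewrite inE => /orP [/eqP <-|Hi].
- rewrite big_cons; apply: Rmax_l.
- rewrite big_cons; apply: Rle_trans (IH Hi) _; apply: Rmax_r.
Qed.

Lemma max_lub n (F : 'I_n -> R) c : 0 <= c -> (forall i, F i <= c) -> MAX n F <= c.
Proof.
move=> H0 H; apply: (big_ind (fun x => x <= c)) => // x y Hx Hy.
by apply: Rmax_lub.
Qed.

Lemma max_ge0 n (F : 'I_n -> R) : 0 <= MAX n F.
Proof.
apply: (big_rec (fun x => 0 <= x)); first lra.
move=> i x _ Hx; apply: Rle_trans Hx (Rmax_r _ _).
Qed.

Lemma sum_le n (F G : 'I_n -> R) : (forall j, F j <= G j) -> SUM n F <= SUM n G.
Proof.
move=> H; apply: (big_ind2 (fun x y => x <= y)) => //; first lra.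
move=> x1 x2 y1 y2 ? ?; lra.
Qed.

Lemma sum_abs n (F : 'I_n -> R) : Rabs (SUM n F) <= SUM n (fun j => Rabs (F j)).
Proof.
apply: (big_ind2 (fun x y => Rabs x <= y)) => //.
- rewrite Rabs_R0; lra.
- move=> x1 x2 y1 y2 ? ?; apply: Rle_trans (Rabs_triang _ _) _; lra.
- move=> i _; lra.
Qed.

Lemma sum_const_le n (F : 'I_n -> R) c : (forall j, F j <= c) -> SUM n F <= INR n * c.
Proof.
elim: n F => [|n IH] F H; first by rewrite big_ord0 /=; lra.
rewrite big_ord_recr S_INR /=.
have := IH (fun j => F (widen_ord (leqnSn n) j)) (fun j => H _).
have := H ord_max. rewrite Rmult_plus_distr_r Rmult_1_l.
move=> ? ?; change (SUM n (fun j => F (widen_ord (leqnSn n) j)) + F ord_max <= INR n * c + c); lra.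
Qed.

Lemma sum_delta n (F : 'I_n -> R) k : SUM n (fun j => F j * ebasis k j) = F k.
Proof.
rewrite (bigD1 k) //= /ebasis eqxx big1; first ring.
by move=> j /= Hj; rewrite (negPf Hj); ring.
Qed.

Lemma sum_zero n : SUM n (fun j : 'I_n => 0) = 0.
Proof. by rewrite big1. Qed.

Section DistV.
Context {n : nat}.
Implicit Types x y z : Vec n.

Lemma distV_ge x y i : Rabs (x i - y i) <= distV x y.
Proof. exact: (max_ub (fun i => Rabs (x i - y i))). Qed.

Lemma distV_le x y c : 0 <= c -> (forall i, Rabs (x i - y i) <= c) -> distV x y <= c.
Proof. move=> H0 H; exact: max_lub. Qed.

Lemma distV_ge0 x y : 0 <= distV x y.
Proof. exact: max_ge0. Qed.

Lemma distV_sym x y : distV x y = distV y x.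
Proof.
apply: Rle_antisym; apply: distV_le => [|i]; try exact: distV_ge0;
  rewrite Rabs_minus_sym; exact: distV_ge.
Qed.

Lemma distV_tri x y z : distV x z <= distV x y + distV y z.
Proof.
apply: distV_le => [|i]; first by have := distV_ge0 x y; have := distV_ge0 y z; lra.
have -> : x i - z i = (x i - y i) + (y i - z i) by ring.
apply: Rle_trans (Rabs_triang _ _) _.
have := distV_ge x y i; have := distV_ge y z i; lra.
Qed.

Lemma distV_eq0 x y : distV x y = 0 -> x = y.
Proof.
move=> H; apply: functional_extensionality => i.
have := distV_ge x y i; rewrite H => Hi.
have := Rabs_pos (x i - y i) => Hp.
have : Rabs (x i - y i) = 0 by lra.
move=> H1; case: (Rcase_abs (x i - y i)) => H2; move: H1; [rewrite Rabs_left // | rewrite Rabs_right //]; lra.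
Qed.

Lemma distV_refl x : distV x x = 0.
Proof.
apply: Rle_antisym; last exact: distV_ge0.
apply: distV_le => [|i]; first lra.
rewrite Rminus_diag Rabs_R0; lra.
Qed.

Lemma distV_ebasis j : distV (ebasis j) (@vzero n) <= 1.
Proof.
apply: distV_le => [|i]; first lra.
rewrite /ebasis /vzero; case: (i == j); rewrite ?Rminus_0_r ?Rabs_R1 ?Rabs_R0; lra.
Qed.

End DistV.

Section DistAff.
Context {n : nat}.
Implicit Types f g h : Vec n -> Vec n.

Lemma dAff_ge0 f g : 0 <= distAff f g.
Proof. rewrite /distAff; apply: Rle_trans (Rmax_l _ _); exact: distV_ge0. Qed.

Lemma dAff_0 f g : distV (f (@vzero n)) (g (@vzero n)) <= distAff f g.
Proof. exact: Rmax_l. Qed.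

Lemma dAff_e f g j : distV (f (ebasis j)) (g (ebasis j)) <= distAff f g.
Proof.
apply: Rle_trans (Rmax_r _ _).
exact: (max_ub (fun j => distV (f (ebasis j)) (g (ebasis j)))).
Qed.

Lemma dAff_le f g c : 0 <= c -> distV (f (@vzero n)) (g (@vzero n)) <= c ->
  (forall j, distV (f (ebasis j)) (g (ebasis j)) <= c) -> distAff f g <= c.
Proof. move=> H0 H1 H2; apply: Rmax_lub => //; exact: max_lub. Qed.

Lemma dAff_sym f g : distAff f g = distAff g f.
Proof.
apply: Rle_antisym; apply: dAff_le; try exact: dAff_ge0;
 try move=> j; rewrite distV_sym; [exact: dAff_0|exact: dAff_e|exact: dAff_0|exact: dAff_e].
Qed.

Lemma dAff_tri f g h : distAff f h <= distAff f g + distAff g h.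
Proof.
apply: dAff_le.
- by have := dAff_ge0 f g; have := dAff_ge0 g h; lra.
- apply: Rle_trans (distV_tri _ (g (@vzero n)) _) _.
  have := dAff_0 f g; have := dAff_0 g h; lra.
- move=> j; apply: Rle_trans (distV_tri _ (g (ebasis j)) _) _.
  have := dAff_e f g j; have := dAff_e g h j; lra.
Qed.

Lemma dAff_refl f : distAff f f = 0.
Proof.
apply: Rle_antisym; last exact: dAff_ge0.
apply: dAff_le; try move=> j; rewrite ?distV_refl; lra.
Qed.

End DistAff.


Section Affine.
Context {n : nat}.
Implicit Types f g : Vec n -> Vec n.
Implicit Types x y : Vec n.

Definition colA f (j : 'I_n) : Vec n := fun i => f (ebasis j) i - f (@vzero n) i.
Definition lipc f := INR n * MAX n (fun j => distV (f (ebasis j)) (f (@vzero n))).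

Lemma lipc_ge0 f : 0 <= lipc f.
Proof. apply: Rmult_le_pos; [exact: pos_INR | exact: max_ge0]. Qed.

Lemma aff_formula f : is_affine_map f ->
  forall x i, f x i = SUM n (fun j => colA f j i * x j) + f (@vzero n) i.
Proof.
move=> [A [b Hf]] x i.
have H0 : f (@vzero n) i = b i.
  by rewrite Hf /vzero (sum_ext (G := fun _ => 0)) ?sum_zero => [|j]; ring.
have HA : forall j, colA f j i = A i j.
  move=> j; rewrite /colA H0 Hf.
  rewrite (sum_ext (G := fun k => A i k * ebasis j k)); first by rewrite sum_delta; ring.
  move=> k; ring.
rewrite Hf H0; congr (_ + _); apply: sum_ext => j; by rewrite HA.
Qed.

Lemma aff_diff f : is_affine_map f ->
  forall x y i, f x i - f y i = SUM n (fun j => colA f j i * (x j - y j)).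
Proof.
move=> Hf x y i; rewrite (aff_formula Hf x) (aff_formula Hf y).
rewrite [RHS](sum_ext (G := fun j => colA f j i * x j + (- (colA f j i * y j)))); last by move=> j; ring.
rewrite sum_add sum_opp; ring.
Qed.

Lemma colA_bound f j i : Rabs (colA f j i) <= MAX n (fun j => distV (f (ebasis j)) (f (@vzero n))).
Proof.
apply: Rle_trans (distV_ge _ _ i) _.
exact: (max_ub (fun j => distV (f (ebasis j)) (f (@vzero n)))).
Qed.

Lemma aff_lip f : is_affine_map f -> forall x y, distV (f x) (f y) <= lipc f * distV x y.
Proof.
move=> Hf x y; apply: distV_le => [|i].
  apply: Rmult_le_pos; [exact: lipc_ge0|exact: distV_ge0].
rewrite (aff_diff Hf); apply: Rle_trans (sum_abs _) _.
rewrite /lipc Rmult_assoc; apply: sum_const_le => j.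
rewrite Rabs_mult; apply: Rmult_le_compat; try exact: Rabs_pos.
- exact: colA_bound.
- exact: distV_ge.
Qed.

Lemma aff_pt f g : is_affine_map f -> is_affine_map g ->
  forall x, distV (f x) (g x) <= distAff f g * (1 + 2 * INR n * distV x (@vzero n)).
Proof.
move=> Hf Hg x; have Hd := dAff_ge0 f g; have Hx := distV_ge0 x (@vzero n).
have Hn := pos_INR n.
apply: distV_le => [|i].
  apply: Rmult_le_pos => //; nra.
rewrite (aff_formula Hf x) (aff_formula Hg x).
have -> : SUM n (fun j => colA f j i * x j) + f (@vzero n) i -
  (SUM n (fun j => colA g j i * x j) + g (@vzero n) i) =
  SUM n (fun j => (colA f j i - colA g j i) * x j) + (f (@vzero n) i - g (@vzero n) i).
  rewrite [X in _ = X + _](sum_ext (G := fun j => colA f j i * x j + (- (colA g j i * x j)))); last by move=> j; ring.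
  rewrite sum_add sum_opp; ring.
apply: Rle_trans (Rabs_triang _ _) _.
have H0 : Rabs (f (@vzero n) i - g (@vzero n) i) <= distAff f g.
  apply: Rle_trans (distV_ge _ _ i) (dAff_0 _ _).
have H1 : Rabs (SUM n (fun j => (colA f j i - colA g j i) * x j)) <=
          INR n * (2 * distAff f g * distV x (@vzero n)).
  apply: Rle_trans (sum_abs _) _; apply: sum_const_le => j.
  rewrite Rabs_mult; apply: Rmult_le_compat; try exact: Rabs_pos.
  - rewrite /colA.
    have -> : f (ebasis j) i - f (@vzero n) i - (g (ebasis j) i - g (@vzero n) i) =
       (f (ebasis j) i - g (ebasis j) i) + - (f (@vzero n) i - g (@vzero n) i) by ring.
    apply: Rle_trans (Rabs_triang _ _) _; rewrite Rabs_Ropp.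
    rewrite (_ : 2 * distAff f g = distAff f g + distAff f g); last ring.
    apply: Rplus_le_compat; last exact: H0.
    exact: Rle_trans (distV_ge _ _ i) (dAff_e f g j).
  - have -> : x j = x j - @vzero n j by rewrite /vzero; ring.
    exact: distV_ge.
nra.
Qed.

Lemma aff_ext f g : is_affine_map f -> is_affine_map g -> distAff f g = 0 -> f = g.
Proof.
move=> Hf Hg H; apply: functional_extensionality => x; apply: distV_eq0.
apply: Rle_antisym; last exact: distV_ge0.
by have := aff_pt Hf Hg x; rewrite H Rmult_0_l.
Qed.

End Affine.

Lemma ebasis_sym n (i j : 'I_n) : ebasis i j = ebasis j i.
Proof. by rewrite /ebasis eq_sym. Qed.

Lemma sum_swap n (F : 'I_n -> 'I_n -> R) :
  SUM n (fun k => SUM n (fun j => F k j)) = SUM n (fun j => SUM n (fun k => F k j)).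
Proof. exact: exchange_big. Qed.

Lemma aff_inv n (f g : Vec n -> Vec n) : is_affine_map f -> cancel f g -> cancel g f ->
  is_affine_map g.
Proof.
move=> Hf fK gK.
exists (fun i j => colA g j i), (g (@vzero n)) => y i.
set v : Vec n := fun k => SUM n (fun j => y j * colA g j k) + g (@vzero n) k.
suff Hv : f v = y by rewrite -{1}Hv fK /v /=; congr (_ + _); apply: sum_ext => j; ring.
apply: functional_extensionality => m.
have E1 : f v m - f (g (@vzero n)) m = SUM n (fun j => y j * ebasis j m).
  rewrite (aff_diff Hf).
  rewrite (sum_ext (G := fun k => SUM n (fun j => colA f k m * (y j * colA g j k)))); last first.
    move=> k; have -> : v k - g (@vzero n) k = SUM n (fun j => y j * colA g j k) by rewrite /v; ring.
    by rewrite sum_distr.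
  rewrite sum_swap; apply: sum_ext => j.
  have -> : ebasis j m = f (g (ebasis j)) m - f (g (@vzero n)) m.
    by rewrite !gK /vzero Rminus_0_r.
  rewrite (aff_diff Hf) sum_distr; apply: sum_ext => k; rewrite /colA; ring.
move: E1; rewrite gK /vzero Rminus_0_r => ->.
rewrite (sum_ext (G := fun j => y j * ebasis m j)) ?sum_delta // => j.
by rewrite ebasis_sym.
Qed.


Lemma list_min (X : Type) (l : list X) (f : X -> R) :
  (forall x, In x l -> 0 < f x) -> exists e, 0 < e /\ forall x, In x l -> e <= f x.
Proof.
elim: l => [|a l IH] H; first by exists 1; split => //; lra.
have [e [He He']] : exists e, 0 < e /\ forall x, In x l -> e <= f x.
  by apply: IH => x Hx; apply: H; right.
have Ha := H a (or_introl erefl).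
exists (Rmin e (f a)); split; first by apply: Rmin_pos.
move=> x [<-|Hx]; first exact: Rmin_r.
apply: Rle_trans (Rmin_l _ _) (He' _ Hx).
Qed.

Lemma list_maxR (X : Type) (l : list X) (f : X -> R) :
  exists M, forall x, In x l -> f x <= M.
Proof.
elim: l => [|a l [M HM]]; first by exists 0.
exists (Rmax (f a) M) => x [<-|Hx]; first exact: Rmax_l.
apply: Rle_trans (HM _ Hx) (Rmax_r _ _).
Qed.

Lemma list_maxN (X : Type) (l : list X) (f : X -> nat) :
  exists M, forall x, In x l -> le (f x) M.
Proof.
elim: l => [|a l [M HM]]; first by exists 0%nat.
exists (Nat.max (f a) M) => x [<-|Hx]; first lia.
have := HM _ Hx; lia.
Qed.

Section Metric.
Variables (T : Type) (d : T -> T -> R).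
Hypothesis drefl : forall x, d x x = 0.
Hypothesis dsym : forall x y, d x y = d y x.
Hypothesis dtri : forall x y z, d x z <= d x y + d y z.

Lemma d_ge0 x y : 0 <= d x y.
Proof. have := dtri x y x; rewrite drefl (dsym y x); lra. Qed.

Lemma ball_open a e : open_for d (fun y => d a y < e).
Proof.
move=> x Hx; exists (e - d a x); split; first lra.
move=> y Hy; have := dtri a x y; lra.
Qed.

Lemma far_open p c : open_for d (fun y => c < d y p).
Proof.
move=> x Hx; exists (d x p - c); split; first lra.
move=> y Hy; have := dtri x y p; lra.
Qed.

Lemma compact_dist0 (S : T -> Prop) p : compact_for d S ->
  (forall eps, eps > 0 -> exists s, S s /\ d s p < eps) -> exists s, S s /\ d s p = 0.
Proof.
move=> HS Happ; apply: NNPP => Hn.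
have Hpos : forall s, S s -> 0 < d s p.
  move=> s Hs; have := d_ge0 s p; case=> // H0; exfalso; apply: Hn; by exists s.
have Hc : forall x, S x -> exists s : {s | S s}, d (proj1_sig s) p / 2 < d x p.
  move=> x Hx; exists (exist _ x Hx) => /=; have := Hpos x Hx; lra.
have [l Hl] := HS {s | S s} (fun s y => d (proj1_sig s) p / 2 < d y p)
  (fun s => @far_open p _) Hc.
have [e [He He']] : exists e, 0 < e /\ forall s, In s l -> e <= d (proj1_sig s) p / 2.
  apply: list_min => s _; have := Hpos _ (proj2_sig s); lra.
have [s [Hs Hsp]] := Happ e He.
have [i [Hi Hi']] := Hl s Hs.
have := He' i Hi; lra.
Qed.

Lemma seq_compact (z : nat -> T) zs :
  (forall eps, eps > 0 -> exists N, forall k, le N k -> d zs (z k) < eps) ->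
  compact_for d (fun y => y = zs \/ exists k, y = z k).
Proof.
move=> Hconv I O HO Hcov.
have [i0 Hi0] := Hcov zs (or_introl erefl).
have [eps [Heps Hball]] := HO i0 zs Hi0.
have [N HN] := Hconv eps Heps.
pose ik (k : nat) : I := proj1_sig (constructive_indefinite_description _
                          (Hcov (z k) (or_intror (ex_intro _ k erefl)))).
have Hik : forall k, O (ik k) (z k).
  by move=> k; rewrite /ik; case: (constructive_indefinite_description _ _).
exists (i0 :: map ik (List.seq 0 N)) => x [->|[k ->]].
  by exists i0; split; [left|].
case: (Nat.lt_ge_cases k N) => Hk.
- exists (ik k); split; last exact: Hik.
  right; apply: in_map; apply/in_seq; lia.
- exists i0; split; [left => // | exact: Hball (HN _ Hk)].
Qed.

Lemma compact_bounded (S : T -> Prop) p : compact_for d S -> exists M, forall y, S y -> d p y <= M.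
Proof.
move=> HS.
have Hc : forall y, S y -> exists m : nat, d p y < INR m.
  move=> y _; have [m Hm] := INR_archimed 1 (d p y) Rlt_0_1; exists m; lra.
have [lm Hlm] := HS nat (fun m y => d p y < INR m) (fun m => @ball_open _ _) Hc.
have [M HM] := list_maxR lm INR.
exists M => y Hy; have [m [Hm Hm']] := Hlm y Hy; have := HM m Hm; lra.
Qed.

End Metric.

Section Prod.
Variables (X Y : Type) (dX : X -> X -> R) (dY : Y -> Y -> R).
Hypothesis drX : forall x, dX x x = 0.
Hypothesis dtX : forall x y z, dX x z <= dX x y + dX y z.
Hypothesis drY : forall x, dY x x = 0.
Hypothesis dtY : forall x y z, dY x z <= dY x y + dY y z.

Definition dP (p q : X * Y) := Rmax (dX p.1 q.1) (dY p.2 q.2).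

Lemma compact_prod (A : X -> Prop) (B : Y -> Prop) :
  compact_for dX A -> compact_for dY B -> compact_for dP (fun p => A p.1 /\ B p.2).
Proof.
move=> HA HB I O HO Hcov.
have H1 : forall a b, A a -> B b -> exists ie : I * R,
    0 < ie.2 /\ forall q, dP (a, b) q < ie.2 -> O ie.1 q.
  move=> a b Ha Hb; have [i Hi] := Hcov (a, b) (conj Ha Hb).
  have [e [He He']] := HO i _ Hi; by exists (i, e).
pose ie (a : {a | A a}) (b : {b | B b}) :=
  proj1_sig (constructive_indefinite_description _ (H1 _ _ (proj2_sig a) (proj2_sig b))).
have Hie : forall a b, 0 < (ie a b).2 /\
    forall q, dP (proj1_sig a, proj1_sig b) q < (ie a b).2 -> O (ie a b).1 q.
  by move=> a b; rewrite /ie; case: (constructive_indefinite_description _ _).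
have H2 : forall a : {a | A a}, exists ld : list {b | B b} * R, 0 < ld.2 /\
    forall x y, dX (proj1_sig a) x < ld.2 -> B y ->
      exists b, In b ld.1 /\ O (ie a b).1 (x, y).
  move=> a.
  have Hc : forall y, B y -> exists b : {b | B b}, dY (proj1_sig b) y < (ie a b).2 / 2.
    move=> y Hy; exists (exist B y Hy).
    have := (Hie a (exist B y Hy)).1; rewrite [proj1_sig _]/= drY; lra.
  have [lb Hlb] := HB _ (fun b y => dY (proj1_sig b) y < (ie a b).2 / 2)
                      (fun b => @ball_open _ _ dtY _ _) Hc.
  have [δ [Hδ Hδ']] : exists e, 0 < e /\ forall b, In b lb -> e <= (ie a b).2 / 2.
    by apply: list_min => b _; have := (Hie a b).1; lra.
  exists (lb, δ); split => // x y Hx Hy.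
  have [b [Hb Hby]] := Hlb y Hy.
  exists b; split => //; apply: (Hie a b).2.
  rewrite /dP /=; simpl in Hx; apply: Rmax_lub_lt; have := Hδ' b Hb; have := (Hie a b).1; lra.
pose ld a := proj1_sig (constructive_indefinite_description _ (H2 a)).
have Hld : forall a, 0 < (ld a).2 /\ forall x y, dX (proj1_sig a) x < (ld a).2 -> B y ->
      exists b, In b (ld a).1 /\ O (ie a b).1 (x, y).
  by move=> a; rewrite /ld; case: (constructive_indefinite_description _ _).
have Hc : forall x, A x -> exists a : {a | A a}, dX (proj1_sig a) x < (ld a).2.
  move=> x Hx; exists (exist A x Hx); rewrite /= drX; exact: (Hld _).1.
have [la Hla] := HA _ (fun a x => dX (proj1_sig a) x < (ld a).2)
                    (fun a => @ball_open _ _ dtX _ _) Hc.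
exists (flat_map (fun a => map (fun b => (ie a b).1) (ld a).1) la).
move=> [x y] [/= Hx Hy].
have [a [Ha Hax]] := Hla x Hx.
have [b [Hb Hob]] := (Hld a).2 x y Hax Hy.
exists (ie a b).1; split => //.
apply/in_flat_map; exists a; split => //; exact: (in_map (fun b => (ie a b).1)).
Qed.

End Prod.

Lemma dP_refl (X : Type) (dX : X -> X -> R) (Hr : forall x, dX x x = 0) p : dP dX dX p p = 0.
Proof. by rewrite /dP !Hr Rmax_left; lra. Qed.

Lemma dP_tri (X : Type) (dX : X -> X -> R) (Ht : forall x y z, dX x z <= dX x y + dX y z) p q r :
  dP dX dX p r <= dP dX dX p q + dP dX dX q r.
Proof.
rewrite /dP; apply: Rmax_lub.
- apply: Rle_trans (Ht _ q.1 _) _; apply: Rplus_le_compat; apply: Rmax_l.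
- apply: Rle_trans (Ht _ q.2 _) _; apply: Rplus_le_compat; apply: Rmax_r.
Qed.


Lemma small_inv e : 0 < e -> exists N, forall k, le N k -> / (INR k + 1) < e.
Proof.
move=> He; have [N HN] := INR_archimed e 1 He.
exists N => k Hk; have Hk' : INR N <= INR k by apply: le_INR.
have Hp : 0 < INR k + 1 by have := pos_INR k; lra.
apply: (Rmult_lt_reg_l (INR k + 1)) => //.
rewrite Rinv_r; last lra.
have := pos_INR N; nra.
Qed.

Lemma zero_small a : 0 <= a -> (forall e, 0 < e -> a < e) -> a = 0.
Proof.
move=> H0 H; apply: Rle_antisym => //; apply: Rnot_lt_le => Ha.
have := H (a / 2); lra.
Qed.

Lemma pick_eta A e : 0 <= A -> 0 < e -> exists eta, 0 < eta /\ A * eta < e.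
Proof.
move=> HA He; exists (e / (A + 1)); split; first by apply: Rdiv_lt_0_compat; lra.
have -> : A * (e / (A + 1)) = e - e / (A + 1) by field; lra.
have : 0 < e / (A + 1) by apply: Rdiv_lt_0_compat; lra.
lra.
Qed.

Section FMach.
Variables (n : nat) (L : (Vec n -> Vec n) -> Prop).
Hypothesis HL : aff_subgroup L.
Variables (x0 : Vec n) (rho : R) (h : 'I_n -> Vec n -> Vec n).
Hypothesis Hrho : 0 < rho.
Hypothesis Hh : forall j, centralizer L (h j).
Hypothesis Hhx : forall j i, h j x0 i = x0 i + rho * ebasis j i.

Lemma div_ge0 a b : 0 <= a -> 0 < b -> 0 <= a / b.
Proof. move=> Ha Hb; rewrite /Rdiv; apply: Rmult_le_pos => //; apply: Rlt_le; exact: Rinv_0_lt_compat. Qed.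

Definition Hc := MAX n (fun j => lipc (h j)).

Definition F (z : Vec n) : Vec n -> Vec n :=
  fun u i => z i + SUM n (fun j => (u j - x0 j) / rho * (h j z i - z i)).

Lemma L_aff l : L l -> is_affine_map l.
Proof. by move=> Hl; case: (HL.1 l Hl). Qed.

Lemma h_aff j : is_affine_map (h j).
Proof. by case: (Hh j) => [[]]. Qed.

Lemma Hc_ge0 : 0 <= Hc.
Proof. exact: max_ge0. Qed.

Lemma h_lip j x y : distV (h j x) (h j y) <= Hc * distV x y.
Proof.
apply: Rle_trans (aff_lip (h_aff j) x y) _.
apply: Rmult_le_compat_r; first exact: distV_ge0.
exact: (max_ub (fun j => lipc (h j))).
Qed.

Lemma F_rep l : L l -> l = F (l x0).
Proof.
move=> Hl; have Hla := L_aff Hl.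
apply: functional_extensionality => u; apply: functional_extensionality => i.
have Hcol : forall j, colA l j i = (h j (l x0) i - l x0 i) / rho.
  move=> j; rewrite ((Hh j).2 l Hl x0) (aff_diff Hla).
  rewrite (sum_ext (G := fun k => (colA l k i * rho) * ebasis j k)); last first.
    by move=> k; rewrite Hhx; ring.
  rewrite sum_delta; field; lra.
rewrite /F; have -> : l u i = l x0 i + (l u i - l x0 i) by ring.
rewrite (aff_diff Hla); congr (_ + _); apply: sum_ext => j; rewrite Hcol; field; lra.
Qed.

Lemma F_affine z : is_affine_map (F z).
Proof.
exists (fun i j => (h j z i - z i) / rho),
  (fun i => z i - SUM n (fun j => (h j z i - z i) / rho * x0 j)) => u i.
rewrite /F.
rewrite (sum_ext (G := fun j => (h j z i - z i) / rho * u j + - ((h j z i - z i) / rho * x0 j))).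
  rewrite sum_add sum_opp; ring.
move=> j; field; lra.
Qed.

Definition Mz z := MAX n (fun j => distV (h j z) z).

Lemma Mz_ge0 z : 0 <= Mz z.
Proof. exact: max_ge0. Qed.

Lemma Mz_bound z : Mz z <= (Hc + 1) * distV z x0 + rho.
Proof.
have H0 := distV_ge0 z x0; have H1 := Hc_ge0.
apply: max_lub => [|j]; first nra.
apply: Rle_trans (distV_tri _ (h j x0) _) _.
apply: Rle_trans (Rplus_le_compat_l _ _ _ (distV_tri _ x0 _)) _.
have E1 := h_lip j z x0.
have E2 : distV (h j x0) x0 <= rho.
  apply: distV_le => [|i]; first lra.
  rewrite Hhx (_ : x0 i + rho * ebasis j i - x0 i = rho * ebasis j i); last ring.
  rewrite Rabs_mult Rabs_pos_eq; last lra.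
  rewrite /ebasis; case: (i == j); rewrite ?Rabs_R1 ?Rabs_R0; lra.
rewrite (distV_sym x0 z); nra.
Qed.

Lemma F_lip z u v : distV (F z u) (F z v) <= INR n * (distV u v / rho * Mz z).
Proof.
apply: distV_le => [|i].
  apply: Rmult_le_pos; first exact: pos_INR.
  apply: Rmult_le_pos; last exact: Mz_ge0.
  apply: div_ge0 => //; exact: distV_ge0.
rewrite /F.
have -> : z i + SUM n (fun j => (u j - x0 j) / rho * (h j z i - z i)) -
  (z i + SUM n (fun j => (v j - x0 j) / rho * (h j z i - z i))) =
  SUM n (fun j => (u j - v j) / rho * (h j z i - z i)).
  rewrite [X in _ = X](sum_ext (G := fun j => (u j - x0 j) / rho * (h j z i - z i) +
     - ((v j - x0 j) / rho * (h j z i - z i)))); last by move=> j; field; lra.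
  rewrite sum_add sum_opp; ring.
apply: Rle_trans (sum_abs _) _; apply: sum_const_le => j.
rewrite Rabs_mult; apply: Rmult_le_compat; try exact: Rabs_pos.
- rewrite /Rdiv Rabs_mult (Rabs_pos_eq (/ rho)); last by apply: Rlt_le; apply: Rinv_0_lt_compat.
  apply: Rmult_le_compat_r; first by apply: Rlt_le; apply: Rinv_0_lt_compat.
  exact: distV_ge.
- apply: Rle_trans (distV_ge _ _ i) _.
  exact: (max_ub (fun j => distV (h j z) z)).
Qed.

Lemma F_contz z z' u :
  distV (F z u) (F z' u) <= (1 + INR n * (distV u x0 / rho * (Hc + 1))) * distV z z'.
Proof.
have Hd := distV_ge0 z z'; have Hu := distV_ge0 u x0; have HH := Hc_ge0.
have Hn := pos_INR n; have Hr : 0 <= / rho by apply: Rlt_le; apply: Rinv_0_lt_compat.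
have Hq : 0 <= distV u x0 / rho by apply: div_ge0.
have Hq2 : 0 <= INR n * (distV u x0 / rho * (Hc + 1)).
  apply: Rmult_le_pos => //; apply: Rmult_le_pos => //; lra.
apply: distV_le => [|i]; first by apply: Rmult_le_pos => //; lra.
rewrite /F.
have -> : z i + SUM n (fun j => (u j - x0 j) / rho * (h j z i - z i)) -
  (z' i + SUM n (fun j => (u j - x0 j) / rho * (h j z' i - z' i))) =
  (z i - z' i) + SUM n (fun j => (u j - x0 j) / rho * ((h j z i - h j z' i) - (z i - z' i))).
  rewrite [X in _ = _ + X](sum_ext (G := fun j => (u j - x0 j) / rho * (h j z i - z i) +
     - ((u j - x0 j) / rho * (h j z' i - z' i)))); last by move=> j; ring.
  rewrite sum_add sum_opp; ring.
apply: Rle_trans (Rabs_triang _ _) _.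
have E1 : Rabs (z i - z' i) <= distV z z' by exact: distV_ge.
have E2 : Rabs (SUM n (fun j => (u j - x0 j) / rho * ((h j z i - h j z' i) - (z i - z' i))))
   <= INR n * (distV u x0 / rho * ((Hc + 1) * distV z z')).
  apply: Rle_trans (sum_abs _) _; apply: sum_const_le => j.
  rewrite Rabs_mult; apply: Rmult_le_compat; try exact: Rabs_pos.
  - rewrite /Rdiv Rabs_mult (Rabs_pos_eq (/ rho)) //.
    apply: Rmult_le_compat_r => //; exact: distV_ge.
  - apply: Rle_trans (Rabs_triang _ _) _; rewrite Rabs_Ropp.
    have := Rle_trans _ _ _ (distV_ge _ _ i) (h_lip j z z'); lra.
have : INR n * (distV u x0 / rho * ((Hc + 1) * distV z z')) =
       INR n * (distV u x0 / rho * (Hc + 1)) * distV z z' by ring.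
lra.
Qed.

Definition CF := 1 + INR n * ((1 + distV (@vzero n) x0) / rho * (Hc + 1)).

Lemma CF_ge0 : 0 <= CF.
Proof.
have H1 := distV_ge0 (@vzero n) x0; have H2 := Hc_ge0; have H3 := pos_INR n.
rewrite /CF; have H4 : 0 <= (1 + distV (@vzero n) x0) / rho by apply: div_ge0; lra.
have : 0 <= INR n * ((1 + distV (@vzero n) x0) / rho * (Hc + 1)).
  apply: Rmult_le_pos => //; apply: Rmult_le_pos => //; lra.
lra.
Qed.

Lemma F_dAff z z' : distAff (F z) (F z') <= CF * distV z z'.
Proof.
have Hd := distV_ge0 z z'; have HH := Hc_ge0; have Hn := pos_INR n.
have Hr : 0 <= / rho by apply: Rlt_le; apply: Rinv_0_lt_compat.
have key : forall u, distV u x0 <= 1 + distV (@vzero n) x0 ->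
    distV (F z u) (F z' u) <= CF * distV z z'.
  move=> u Hu; apply: Rle_trans (F_contz z z' u) _.
  apply: Rmult_le_compat_r => //; rewrite /CF.
  apply: Rplus_le_compat_l; apply: Rmult_le_compat_l => //.
  apply: Rmult_le_compat_r; first lra.
  apply: Rmult_le_compat_r => //.
apply: dAff_le.
- by have := CF_ge0; nra.
- apply: key; have := distV_ge0 (@vzero n) x0; rewrite distV_sym; lra.
- move=> j; apply: key; apply: Rle_trans (distV_tri _ (@vzero n) _) _.
  have := distV_ebasis j; lra.
Qed.


Section Dir1.
Variable U : Vec n -> Prop.
Hypothesis HpU : preserves L U.
Hypothesis Hprop : proper_action L U.
Hypothesis Ux0 : U x0.
Variable g : Vec n -> Vec n.
Hypothesis Hg : Aff g.
Hypothesis Happ : forall eps, eps > 0 -> exists l, L l /\ distAff g l < eps.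
Hypothesis Ugx : U (g x0).

Lemma Hseq : forall k : nat, exists l, L l /\ distAff g l < / (INR k + 1).
Proof. move=> k; apply: Happ; apply: Rinv_0_lt_compat; have := pos_INR k; lra. Qed.

Definition lk k := proj1_sig (constructive_indefinite_description _ (Hseq k)).
Lemma Hlk k : L (lk k) /\ distAff g (lk k) < / (INR k + 1).
Proof. by rewrite /lk; case: (constructive_indefinite_description _ _). Qed.

Lemma conv_lemma C : 0 <= C -> forall eps, eps > 0 ->
  exists N, forall k, le N k -> C * distAff g (lk k) < eps.
Proof.
move=> HC eps Heps.
have [N HN] := @small_inv (eps / (C + 1)) ltac:(apply: Rdiv_lt_0_compat; lra).
exists N => k Hk; have := HN k Hk; have := (Hlk k).2; have := dAff_ge0 g (lk k).
move=> H1 H2 H3.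
have H4 : distAff g (lk k) < eps / (C + 1) by lra.
have H5 : (C + 1) * distAff g (lk k) < eps.
  rewrite Rmult_comm; apply: (Rmult_lt_reg_r (/ (C + 1))).
    apply: Rinv_0_lt_compat; lra.
  rewrite Rmult_assoc Rinv_r; last lra. rewrite Rmult_1_r; exact: H4.
nra.
Qed.

Lemma dir1_core : L g.
Proof.
case: Hg => Hga Hgb.
pose zs := g x0.
pose z k := lk k x0.
pose c0 := 1 + 2 * INR n * distV x0 (@vzero n).
have Hc0 : 0 <= c0.
  have := distV_ge0 x0 (@vzero n); have := pos_INR n => ? ?.
  rewrite /c0; have : 0 <= INR n * distV x0 (@vzero n) by apply: Rmult_le_pos.
  lra.
have Hz : forall k, distV zs (z k) <= c0 * distAff g (lk k).
  move=> k; rewrite Rmult_comm; exact: aff_pt Hga (L_aff (Hlk k).1) x0.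
pose K := fun y => y = zs \/ exists k, y = z k.
have HK : compact_for (@distV n) K.
  apply: seq_compact => eps Heps.
  have [N HN] := conv_lemma Hc0 Heps.
  by exists N => k Hk; apply: Rle_lt_trans (Hz k) (HN k Hk).
have HKU : forall y, K y -> U y.
  move=> y [->|[k ->]]; first exact: Ugx.
  exact: HpU (Hlk k).1 Ux0.
have HS := Hprop HKU HK.
have [j0 fK gK] : bijective (lk 0) by case: (HL.1 _ (Hlk 0).1).
have Lj0 : L j0 := HL.2.2.2 _ _ (Hlk 0).1 fK gK.
pose m k := fun x => lk k (j0 x).
have Lm : forall k, L (m k) := fun k => HL.2.2.1 _ _ (Hlk k).1 Lj0.
have Hmz : forall k, m k (z 0%nat) = z k.
  by move=> k; rewrite /m /z fK.
have HSm : forall k, (fun l => L l /\ exists x, K x /\ K (l x)) (m k).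
  move=> k; split; first exact: Lm.
  exists (z 0%nat); rewrite Hmz; split; right; [exists 0%nat | exists k] => //.
pose w k := m k x0.
pose ws := g (j0 x0).
pose c1 := 1 + 2 * INR n * distV (j0 x0) (@vzero n).
have Hc1 : 0 <= c1.
  have := distV_ge0 (j0 x0) (@vzero n); have := pos_INR n => ? ?.
  rewrite /c1; have : 0 <= INR n * distV (j0 x0) (@vzero n) by apply: Rmult_le_pos.
  lra.
have Hw : forall k, distV ws (w k) <= c1 * distAff g (lk k).
  move=> k; rewrite Rmult_comm; exact: aff_pt Hga (L_aff (Hlk k).1) (j0 x0).
have Hmrep : forall k, m k = F (w k) := fun k => F_rep (Lm k).
have HCF := CF_ge0.
have [s [HSs Hs0]] : exists s, (fun l => L l /\ exists x, K x /\ K (l x)) s /\ distAff s (F ws) = 0.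
  apply: (compact_dist0 dAff_refl dAff_sym dAff_tri HS) => eps Heps.
  have [N HN] := conv_lemma (Rmult_le_pos _ _ HCF Hc1) Heps.
  exists (m N); split; first exact: HSm.
  rewrite Hmrep; apply: Rle_lt_trans (F_dAff _ _) _.
  rewrite distV_sym; apply: Rle_lt_trans (HN N (le_n _)).
  rewrite Rmult_assoc; apply: Rmult_le_compat_l => //; exact: Hw.
have Hs_eq : s = F ws := aff_ext (L_aff HSs.1) (F_affine ws) Hs0.
pose C2 := 1 + INR n * (distV (z 0%nat) x0 / rho * (Hc + 1)).
have HC2 : 0 <= C2.
  rewrite /C2; have : 0 <= INR n * (distV (z 0%nat) x0 / rho * (Hc + 1)).
    apply: Rmult_le_pos; first exact: pos_INR.
    apply: Rmult_le_pos; first by apply: div_ge0 => //; exact: distV_ge0.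
    have := Hc_ge0; lra.
  lra.
have HFz0 : F ws (z 0%nat) = zs.
  apply: distV_eq0; apply: zero_small; first exact: distV_ge0.
  move=> e He.
  have [N HN] := conv_lemma (Rplus_le_le_0_compat _ _ (Rmult_le_pos _ _ HC2 Hc1) Hc0) He.
  apply: Rle_lt_trans (distV_tri _ (F (w N) (z 0%nat)) _) _.
  have E : F (w N) (z 0%nat) = z N by rewrite -Hmrep Hmz.
  rewrite [in X in _ + X]E; apply: Rle_lt_trans (HN N (le_n _)).
  rewrite Rmult_plus_distr_r; apply: Rplus_le_compat.
  - apply: Rle_trans (F_contz _ _ _) _; rewrite -/C2 Rmult_assoc.
    apply: Rmult_le_compat_l => //; exact: Hw.
  - rewrite distV_sym; exact: Hz.
pose l := fun x => s (lk 0 x).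
have Ll : L l := HL.2.2.1 _ _ HSs.1 (Hlk 0).1.
have Hlx0 : l x0 = zs by rewrite /l -/(z 0%nat) Hs_eq HFz0.
have Hgrep : g = F zs.
  apply: (aff_ext Hga (F_affine zs)); apply: zero_small; first exact: dAff_ge0.
  move=> e He.
  have [N HN] := conv_lemma (Rplus_le_le_0_compat _ _ Rle_0_1 (Rmult_le_pos _ _ HCF Hc0)) He.
  apply: Rle_lt_trans (dAff_tri _ (lk N) _) _.
  apply: Rle_lt_trans (HN N (le_n _)).
  rewrite Rmult_plus_distr_r Rmult_1_l; apply: Rplus_le_compat_l.
  rewrite {1}(F_rep (Hlk N).1) -/(z N).
  apply: Rle_trans (F_dAff _ _) _; rewrite distV_sym Rmult_assoc.
  apply: Rmult_le_compat_l => //; exact: Hz.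
by rewrite Hgrep -Hlx0 -(F_rep Ll).
Qed.

End Dir1.


Lemma h_comm k l u : centralizer L k -> L l -> k (l u) = l (k u).
Proof. by move=> Hk Hl; rewrite (Hk.2 l Hl u). Qed.

Lemma cont_est (k : Vec n -> Vec n) a b l x y R0 :
  centralizer L k -> k a = x0 -> L l -> l x = y -> distV (l x0) x0 <= R0 ->
  distV (l x0) (k b) <= lipc k * (INR n * (distV a x / rho * ((Hc + 1) * R0 + rho)) + distV y b).
Proof.
move=> Hk Hka Hl Hlx HR.
have Hkaff : is_affine_map k by case: Hk => [[]].
have E : l x0 = k (l a) by rewrite -{1}Hka (h_comm _ Hk Hl).
rewrite E; apply: Rle_trans (aff_lip Hkaff _ _) _.
apply: Rmult_le_compat_l; first exact: lipc_ge0.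
apply: Rle_trans (distV_tri _ (l x) _) _; rewrite Hlx.
apply: Rplus_le_compat_r.
set z := l x0 in E HR *.
have Fl : forall u, l u = F z u by move=> u; rewrite {1}(F_rep Hl).
rewrite Fl -Hlx Fl; apply: Rle_trans (F_lip _ _ _) _.
apply: Rmult_le_compat_l; first exact: pos_INR.
apply: Rmult_le_compat_l; first by apply: div_ge0 => //; exact: distV_ge0.
apply: Rle_trans (Mz_bound z) _.
have := Hc_ge0; nra.
Qed.

Lemma loc_bound (k : Vec n -> Vec n) a l x d :
  centralizer L k -> k a = x0 -> L l -> 0 <= d ->
  lipc k * (INR n * (d / rho * (Hc + 1))) <= / 2 -> distV a x <= d ->
  distV (l x0) x0 <= 2 * lipc k * (distV (l x) a + INR n * d).
Proof.
move=> Hk Hka Hl Hd Hq Hax.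
set D := distV (l x0) x0.
have H1 := @cont_est k a a l x (l x) D Hk Hka Hl erefl (Rle_refl _).
rewrite Hka -/D in H1.
have Hlam := lipc_ge0 k; have Hn := pos_INR n; have HH := Hc_ge0.
have HD : 0 <= D by exact: distV_ge0.
have Ht : distV a x / rho <= d / rho.
  rewrite /Rdiv; apply: Rmult_le_compat_r => //; apply: Rlt_le; exact: Rinv_0_lt_compat.
have Ht0 : 0 <= distV a x / rho by apply: div_ge0 => //; exact: distV_ge0.
have H2 : INR n * (distV a x / rho * ((Hc + 1) * D + rho)) <=
          INR n * (d / rho * ((Hc + 1) * D + rho)).
  apply: Rmult_le_compat_l => //; apply: Rmult_le_compat_r => //; nra.
have H3 : lipc k * (INR n * (d / rho * ((Hc + 1) * D + rho))) =
   lipc k * (INR n * (d / rho * (Hc + 1))) * D + lipc k * INR n * d.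
  field; lra.
have H4 : lipc k * (INR n * (d / rho * (Hc + 1))) * D <= / 2 * D.
  by apply: Rmult_le_compat_r.
have H5 : D <= lipc k * (INR n * (d / rho * ((Hc + 1) * D + rho))) + lipc k * distV (l x) a.
  apply: Rle_trans H1 _; rewrite Rmult_plus_distr_l; apply: Rplus_le_compat_r.
  by apply: Rmult_le_compat_l.
have : D <= / 2 * D + lipc k * INR n * d + lipc k * distV (l x) a by lra.
move=> H6.
have -> : 2 * lipc k * (distV (l x) a + INR n * d) =
          2 * (lipc k * INR n * d + lipc k * distV (l x) a) by ring.
lra.
Qed.


Section Dir2.
Variable U : Vec n -> Prop.
Hypothesis Ux0 : U x0.
Hypothesis Htr : acts_transitively (centralizer L) U.
Hypothesis HLc : closed_in_Aff L.
Variable K : Vec n -> Prop.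
Hypothesis HKU : forall x, K x -> U x.
Hypothesis HK : compact_for (@distV n) K.

Definition SK := fun l => L l /\ exists x, K x /\ K (l x).

Lemma kex a : U a -> exists k, centralizer L k /\ k a = x0.
Proof. move=> Ha; exact: Htr.2 a x0 Ha Ux0. Qed.

Lemma dex (k : Vec n -> Vec n) : exists d, 0 < d /\ lipc k * (INR n * (d / rho * (Hc + 1))) <= / 2.
Proof.
pose A := lipc k * INR n * (Hc + 1) / rho.
have HA : 0 <= A.
  apply: div_ge0 => //; apply: Rmult_le_pos; last by have := Hc_ge0; lra.
  apply: Rmult_le_pos; [exact: lipc_ge0 | exact: pos_INR].
exists (/ (2 * (A + 1))); split; first by apply: Rinv_0_lt_compat; lra.
have -> : lipc k * (INR n * (/ (2 * (A + 1)) / rho * (Hc + 1))) = A * / (2 * (A + 1)).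
  rewrite /A /Rdiv; ring.
apply: (Rmult_le_reg_r (2 * (A + 1))); first lra.
rewrite Rmult_assoc Rinv_l; last lra.
have -> : / 2 * (2 * (A + 1)) = A + 1 by field.
lra.
Qed.

Lemma Rbound : exists R0, 0 <= R0 /\ forall l x, L l -> K x -> K (l x) -> distV (l x0) x0 <= R0.
Proof.
pose ka (a : {a | K a}) := proj1_sig (constructive_indefinite_description _ (kex (HKU (proj2_sig a)))).
have Hka : forall a, centralizer L (ka a) /\ ka a (proj1_sig a) = x0.
  by move=> a; rewrite /ka; case: (constructive_indefinite_description _ _).
pose da a := proj1_sig (constructive_indefinite_description _ (dex (ka a))).
have Hda : forall a, 0 < da a /\ lipc (ka a) * (INR n * (da a / rho * (Hc + 1))) <= / 2.
  by move=> a; rewrite /da; case: (constructive_indefinite_description _ _).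
have Hcv : forall y, K y -> exists a : {a | K a}, distV (proj1_sig a) y < da a.
  move=> y Hy; exists (exist K y Hy); rewrite /= distV_refl; exact: (Hda _).1.
have [la Hla] := @HK {a | K a} (fun a y => distV (proj1_sig a) y < da a) (fun (a : {a | K a}) => @ball_open _ _ (@distV_tri n) (proj1_sig a) (da a)) Hcv.
have [M HM] := compact_bounded (@distV_tri n) x0 HK.
have [R1 HR1] := list_maxR la (fun a => 2 * lipc (ka a) * (2 * M + INR n * da a)).
exists (Rmax 0 R1); split; first exact: Rmax_l.
move=> l x Hl Kx Klx.
have [a [Ha Hax]] := Hla x Kx.
apply: Rle_trans (Rle_trans _ _ _ _ (HR1 a Ha)) (Rmax_r _ _).
apply: Rle_trans (loc_bound (Hka a).1 (Hka a).2 Hl _ (Hda a).2 _) _.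
- exact: Rlt_le (Hda a).1.
- exact: Rlt_le Hax.
apply: Rmult_le_compat_l; first by have := lipc_ge0 (ka a); lra.
apply: Rplus_le_compat_r.
apply: Rle_trans (distV_tri _ x0 _) _.
have := HM _ Klx; have := HM _ (proj2_sig a); rewrite (distV_sym (l x)); lra.
Qed.

Section WithR.
Variable R0 : R.
Hypothesis HR0 : 0 <= R0.
Hypothesis HR : forall l x, L l -> K x -> K (l x) -> distV (l x0) x0 <= R0.

Definition Qab a b := forall eta, 0 < eta -> exists l x, L l /\ K x /\ K (l x) /\
   distV a x < eta /\ distV b (l x) < eta.

Lemma L_inv l : L l -> exists l', L l' /\ cancel l l' /\ cancel l' l.
Proof.
move=> Hl; have [l' fK gK] : bijective l by case: (HL.1 _ Hl).
exists l'; split; last by split.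
exact: HL.2.2.2 _ _ Hl fK gK.
Qed.

Lemma Q_swap a b : Qab a b -> Qab b a.
Proof.
move=> HQ eta Heta; have [l [x [Hl [Kx [Klx [H1 H2]]]]]] := HQ eta Heta.
have [l' [Hl' [fK gK]]] := L_inv Hl.
exists l', (l x); split => //; rewrite fK; split => //; split => //; split => //.
Qed.

Definition Ck (k : Vec n -> Vec n) := lipc k * (INR n * (/ rho * ((Hc + 1) * R0 + rho)) + 1).

Lemma Ck_ge0 k : 0 <= Ck k.
Proof.
rewrite /Ck; apply: Rmult_le_pos; first exact: lipc_ge0.
have : 0 <= INR n * (/ rho * ((Hc + 1) * R0 + rho)).
  apply: Rmult_le_pos; first exact: pos_INR.
  apply: Rmult_le_pos; first by apply: Rlt_le; apply: Rinv_0_lt_compat.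
  have := Hc_ge0; nra.
lra.
Qed.

Lemma Cest a b k : centralizer L k -> k a = x0 -> forall l x eta, L l -> K x -> K (l x) ->
  distV a x < eta -> distV b (l x) < eta -> distV (l x0) (k b) <= Ck k * eta.
Proof.
move=> Hk Hka l x eta Hl Kx Klx H1 H2.
apply: Rle_trans (@cont_est k a b l x (l x) R0 Hk Hka Hl erefl (HR Hl Kx Klx)) _.
rewrite /Ck Rmult_assoc; apply: Rmult_le_compat_l; first exact: lipc_ge0.
rewrite [(_ + 1) * eta]Rmult_plus_distr_r Rmult_1_l (distV_sym (l x) b); apply: Rplus_le_compat; last lra.
have HH := Hc_ge0.
have Hq : 0 <= / rho * ((Hc + 1) * R0 + rho).
  apply: Rmult_le_pos; first by apply: Rlt_le; apply: Rinv_0_lt_compat.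
  nra.
have -> : INR n * (distV a x / rho * ((Hc + 1) * R0 + rho)) =
   INR n * (distV a x * (/ rho * ((Hc + 1) * R0 + rho))) by rewrite /Rdiv; ring.
have -> : INR n * (/ rho * ((Hc + 1) * R0 + rho)) * eta =
   INR n * (eta * (/ rho * ((Hc + 1) * R0 + rho))) by ring.
apply: Rmult_le_compat_l; first exact: pos_INR.
apply: Rmult_le_compat_r => //; lra.
Qed.

Definition cpt (v : Vec n) := 1 + INR n * (distV v x0 / rho * (Hc + 1)).

Lemma cpt_ge0 v : 0 <= cpt v.
Proof.
rewrite /cpt; have : 0 <= INR n * (distV v x0 / rho * (Hc + 1)).
  apply: Rmult_le_pos; first exact: pos_INR.
  apply: Rmult_le_pos; first by apply: div_ge0 => //; exact: distV_ge0.
  have := Hc_ge0; lra.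
lra.
Qed.

Definition Cm := INR n * (/ rho * ((Hc + 1) * R0 + rho)).

Lemma Cm_ge0 : 0 <= Cm.
Proof.
rewrite /Cm; apply: Rmult_le_pos; first exact: pos_INR.
apply: Rmult_le_pos; first by apply: Rlt_le; apply: Rinv_0_lt_compat.
have := Hc_ge0; nra.
Qed.

Lemma Flip_R l u v : L l -> distV (l x0) x0 <= R0 -> distV (l u) (l v) <= Cm * distV u v.
Proof.
move=> Hl HRl.
have Fl : forall u, l u = F (l x0) u by move=> w; rewrite {1}(F_rep Hl).
rewrite (Fl u) (Fl v); apply: Rle_trans (F_lip _ _ _) _.
have HMz : Mz (l x0) <= (Hc + 1) * R0 + rho.
  apply: Rle_trans (Mz_bound _) _; have := Hc_ge0; nra.
have E : INR n * (distV u v / rho * ((Hc + 1) * R0 + rho)) = Cm * distV u v.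
  by rewrite /Cm /Rdiv; ring.
rewrite -E; apply: Rmult_le_compat_l; first exact: pos_INR.
apply: Rmult_le_compat_l => //; apply: div_ge0 => //; exact: distV_ge0.
Qed.

Lemma limF_prop a b ka kb : K a -> K b -> centralizer L ka -> ka a = x0 ->
  centralizer L kb -> kb b = x0 -> Qab a b ->
  (forall u, F (ka b) (F (kb a) u) = u) /\ F (ka b) a = b.
Proof.
move=> Ka Kb Hka Hkaa Hkb Hkbb HQ.
have HCa := Ck_ge0 ka; have HCb := Ck_ge0 kb; have HCm := Cm_ge0.
split.
- move=> u; apply: distV_eq0; apply: zero_small; first exact: distV_ge0.
  move=> e He.
  set v := F (kb a) u.
  have HA : 0 <= cpt v * Ck ka + Cm * (cpt u * Ck kb).
    have := cpt_ge0 v; have := cpt_ge0 u => *.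
    apply: Rplus_le_le_0_compat; [exact: Rmult_le_pos|].
    apply: Rmult_le_pos => //; exact: Rmult_le_pos.
  have [eta [Heta Heta']] := pick_eta HA He.
  have [l [x [Hl [Kx [Klx [H1 H2]]]]]] := HQ eta Heta.
  have [l' [Hl' [fK gK]]] := L_inv Hl.
  have Klx' : K (l' (l x)) by rewrite fK.
  have E1 : distV (l x0) (ka b) <= Ck ka * eta := Cest Hka Hkaa Hl Kx Klx H1 H2.
  have E2 : distV (l' x0) (kb a) <= Ck kb * eta.
    apply: (Cest Hkb Hkbb Hl' Klx Klx') => //; rewrite fK //.
  have Fl : forall w, l w = F (l x0) w by move=> w; rewrite {1}(F_rep Hl).
  have Fl' : forall w, l' w = F (l' x0) w by move=> w; rewrite {1}(F_rep Hl').
  have Eu : u = l (l' u) by rewrite gK.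
  rewrite [X in distV _ X]Eu.
  apply: Rle_lt_trans (distV_tri _ (l v) _) _.
  have T1 : distV (F (ka b) v) (l v) <= cpt v * (Ck ka * eta).
    rewrite (Fl v); apply: Rle_trans (F_contz _ _ _) _.
    apply: Rmult_le_compat_l; first exact: cpt_ge0.
    by rewrite distV_sym.
  have T2 : distV (l v) (l (l' u)) <= Cm * (cpt u * (Ck kb * eta)).
    apply: Rle_trans (Flip_R _ _ Hl (HR Hl Kx Klx)) _.
    apply: Rmult_le_compat_l => //.
    rewrite /v (Fl' u); apply: Rle_trans (F_contz _ _ _) _.
    apply: Rmult_le_compat_l; first exact: cpt_ge0.
    by rewrite distV_sym.
  have : cpt v * (Ck ka * eta) + Cm * (cpt u * (Ck kb * eta)) =
         (cpt v * Ck ka + Cm * (cpt u * Ck kb)) * eta by ring.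
  lra.
- apply: distV_eq0; apply: zero_small; first exact: distV_ge0.
  move=> e He.
  have HA : 0 <= cpt a * Ck ka + Cm + 1.
    have := cpt_ge0 a => *; have : 0 <= cpt a * Ck ka by exact: Rmult_le_pos.
    lra.
  have [eta [Heta Heta']] := pick_eta HA He.
  have [l [x [Hl [Kx [Klx [H1 H2]]]]]] := HQ eta Heta.
  have E1 : distV (l x0) (ka b) <= Ck ka * eta := Cest Hka Hkaa Hl Kx Klx H1 H2.
  have Fl : forall w, l w = F (l x0) w by move=> w; rewrite {1}(F_rep Hl).
  apply: Rle_lt_trans (distV_tri _ (l a) _) _.
  apply: Rle_lt_trans (Rplus_le_compat_l _ _ _ (distV_tri _ (l x) _)) _.
  have T1 : distV (F (ka b) a) (l a) <= cpt a * (Ck ka * eta).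
    rewrite (Fl a); apply: Rle_trans (F_contz _ _ _) _.
    apply: Rmult_le_compat_l; first exact: cpt_ge0.
    by rewrite distV_sym.
  have T2 : distV (l a) (l x) <= Cm * eta.
    apply: Rle_trans (Flip_R _ _ Hl (HR Hl Kx Klx)) _.
    apply: Rmult_le_compat_l => //; exact: Rlt_le.
  have T3 : distV (l x) b < eta by rewrite distV_sym.
  have : cpt a * (Ck ka * eta) + Cm * eta + eta = (cpt a * Ck ka + Cm + 1) * eta by ring.
  lra.
Qed.

End WithR.

Lemma dir2_core : compact_for (@distAff n) SK.
Proof.
have [R0 [HR0 HR]] := Rbound.
move=> I O HO Hcov.
case: (classic (exists l, SK l)) => [[l0 Hl0]|Hne]; last first.
  by exists nil => l Hl; exfalso; apply: Hne; exists l.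
have [i0 _] := Hcov l0 Hl0.
have Hloc : forall p : Vec n * Vec n, K p.1 -> K p.2 -> exists ie : I * R, 0 < ie.2 /\
    forall l x, L l -> K x -> K (l x) -> distV p.1 x < ie.2 -> distV p.2 (l x) < ie.2 -> O ie.1 l.
  move=> [a b] /= Ka Kb.
  case: (classic (Qab a b)) => HQ; last first.
    have [eta Heta] := not_all_ex_not _ _ HQ.
    have [Heta0 Hnot] := imply_to_and _ _ Heta.
    exists (i0, eta); split => // l x Hl Kx Klx H1 H2; exfalso; apply: Hnot.
    by exists l, x.
  have [ka [Hka Hkaa]] := kex (HKU Ka).
  have [kb [Hkb Hkbb]] := kex (HKU Kb).
  have [Hinv1 Hab] := limF_prop HR0 HR Ka Kb Hka Hkaa Hkb Hkbb HQ.
  have [Hinv2 _] := limF_prop HR0 HR Kb Ka Hkb Hkbb Hka Hkaa (Q_swap HQ).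
  have Hbij : bijective (F (ka b)) := Bijective Hinv2 Hinv1.
  have HCC : 0 <= CF * Ck R0 ka := Rmult_le_pos _ _ CF_ge0 (Ck_ge0 HR0 ka).
  have Happr : forall eta l x, L l -> K x -> K (l x) -> distV a x < eta -> distV b (l x) < eta ->
      distAff (F (ka b)) l <= CF * Ck R0 ka * eta.
    move=> eta l x Hl Kx Klx H1 H2.
    rewrite (F_rep Hl); apply: Rle_trans (F_dAff _ _) _.
    rewrite Rmult_assoc; apply: Rmult_le_compat_l; first exact: CF_ge0.
    rewrite distV_sym; exact: (Cest HR0 HR Hka Hkaa Hl Kx Klx H1 H2).
  have LF : L (F (ka b)).
    apply: HLc; first by split; [exact: F_affine | exact: Hbij].
    move=> eps Heps.
    have [eta [Heta Heta']] := pick_eta HCC Heps.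
    have [l [x [Hl [Kx [Klx [H1 H2]]]]]] := HQ eta Heta.
    exists l; split => //; apply: Rle_lt_trans Heta'; exact: Happr Hl Kx Klx H1 H2.
  have SF : SK (F (ka b)) by split => //; exists a; rewrite Hab.
  have [i Hi] := Hcov _ SF.
  have [eps [Heps Hball]] := HO i _ Hi.
  have [eta [Heta Heta']] := pick_eta HCC Heps.
  exists (i, eta); split => // l x Hl Kx Klx H1 H2.
  apply: Hball; apply: Rle_lt_trans Heta'; exact: Happr Hl Kx Klx H1 H2.
pose ie (p : {p : Vec n * Vec n | K p.1 /\ K p.2}) :=
  proj1_sig (constructive_indefinite_description _
     (Hloc _ (proj1 (proj2_sig p)) (proj2 (proj2_sig p)))).
have Hie : forall p, 0 < (ie p).2 /\ forall l x, L l -> K x -> K (l x) ->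
    distV (proj1_sig p).1 x < (ie p).2 -> distV (proj1_sig p).2 (l x) < (ie p).2 -> O (ie p).1 l.
  by move=> p; rewrite /ie; case: (constructive_indefinite_description _ _).
have HKK := compact_prod (@distV_refl n) (@distV_tri n) (@distV_refl n) (@distV_tri n) HK HK.
have Hcv : forall q : Vec n * Vec n, K q.1 /\ K q.2 ->
    exists p : {p : Vec n * Vec n | K p.1 /\ K p.2}, dP (@distV n) (@distV n) (proj1_sig p) q < (ie p).2.
  move=> q Hq; exists (exist (fun p : Vec n * Vec n => K p.1 /\ K p.2) q Hq).
  rewrite /= dP_refl; [exact: (Hie _).1 | exact: distV_refl].
have [lp Hlp] := HKK {p : Vec n * Vec n | K p.1 /\ K p.2}
   (fun p q => dP (@distV n) (@distV n) (proj1_sig p) q < (ie p).2)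
   (fun p => @ball_open _ _ (dP_tri (@distV_tri n)) _ _) Hcv.
exists (map (fun p => (ie p).1) lp) => l [Hl [x [Kx Klx]]].
have [p [Hp Hpq]] := Hlp (x, l x) (conj Kx Klx).
rewrite /dP /= in Hpq.
exists (ie p).1; split; first exact: (in_map (fun p => (ie p).1)).
apply: ((Hie p).2 l x) => //.
- exact: Rle_lt_trans (Rmax_l _ _) Hpq.
- exact: Rle_lt_trans (Rmax_r _ _) Hpq.
Qed.

End Dir2.

End FMach.


Lemma setup n (L : (Vec n -> Vec n) -> Prop) (U : Vec n -> Prop) x0 :
  open_for (@distV n) U -> U x0 -> acts_transitively (centralizer L) U ->
  exists rho (h : 'I_n -> Vec n -> Vec n), 0 < rho /\ (forall j, centralizer L (h j)) /\
    (forall j i, h j x0 i = x0 i + rho * ebasis j i).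
Proof.
move=> HUo Ux0 Htr.
have [r [Hr Hball]] := HUo x0 Ux0.
pose q (j : 'I_n) : Vec n := fun i => x0 i + r / 2 * ebasis j i.
have Hq : forall j, exists g, centralizer L g /\ g x0 = q j.
  move=> j; apply: Htr.2 => //; apply: Hball.
  apply: Rle_lt_trans (_ : distV x0 (q j) <= r / 2) _; last lra.
  apply: distV_le => [|i]; first lra.
  rewrite /q (_ : x0 i - (x0 i + r / 2 * ebasis j i) = - (r / 2 * ebasis j i)); last ring.
  rewrite Rabs_Ropp Rabs_mult Rabs_pos_eq; last lra.
  rewrite /ebasis; case: (i == j); rewrite ?Rabs_R1 ?Rabs_R0; lra.
exists (r / 2), (fun j => proj1_sig (constructive_indefinite_description _ (Hq j))).
split; first lra.
split => [j|j i]; case: (constructive_indefinite_description _ _) => g [Hg1 Hg2] //=.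
by rewrite Hg2.
Qed.

Theorem proposition7p3 (n : nat) (L : (Vec n -> Vec n) -> Prop)
  (U : Vec n -> Prop) :
  aff_subgroup L ->
  open_for (@distV n) U ->
  (exists x, U x) ->
  acts_transitively (centralizer L) U ->
  preserves L U ->
  (proper_action L U <-> closed_in_Aff L).
Proof.
move=> HL HUo [u Uu] Htr HpU; split.
- move=> Hprop g Hg Happ.
  have Hg' := Hg; case: Hg' => Hga [g' gK g'K].
  have Hg'a := aff_inv Hga gK g'K.
  have [r [Hr Hball]] := HUo u Uu.
  pose lam := lipc g'.
  have Hlam : 0 <= lam := lipc_ge0 g'.
  pose c := 1 + 2 * INR n * distV u (@vzero n).
  have Hc : 1 <= c.
    rewrite /c; have : 0 <= INR n * distV u (@vzero n).
      apply: Rmult_le_pos; [exact: pos_INR | exact: distV_ge0].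
    lra.
  have Heps : r / ((lam + 1) * c) > 0.
    apply: Rdiv_lt_0_compat => //; apply: Rmult_lt_0_compat; lra.
  have [l [Hl Hgl]] := Happ _ Heps.
  have Hla : is_affine_map l by case: (HL.1 l Hl).
  have Uv : U (l u) := HpU l u Hl Uu.
  have E1 : distV (g u) (l u) < r / (lam + 1).
    apply: Rle_lt_trans (aff_pt Hga Hla u) _.
    rewrite -/c.
    have -> : r / (lam + 1) = r / ((lam + 1) * c) * c by field; lra.
    apply: Rmult_lt_compat_r => //; lra.
  have E2 : distV u (g' (l u)) < r.
    rewrite -{1}(gK u); apply: Rle_lt_trans (aff_lip Hg'a _ _) _.
    rewrite -/lam.
    apply: Rle_lt_trans (Rmult_le_compat_l _ _ _ Hlam (Rlt_le _ _ E1)) _.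
    have -> : lam * (r / (lam + 1)) = r - r / (lam + 1) by field; lra.
    have : 0 < r / (lam + 1) by apply: Rdiv_lt_0_compat; lra.
    lra.
  have Ux0 : U (g' (l u)) := Hball _ E2.
  have Ugx : U (g (g' (l u))) by rewrite g'K.
  have [rho [h [Hrho [Hh Hhx]]]] := setup HUo Ux0 Htr.
  exact (dir1_core HL Hrho Hh Hhx HpU Hprop Ux0 Hg Happ Ugx).
- move=> HLc K HKU HK.
  have [rho [h [Hrho [Hh Hhx]]]] := setup HUo Uu Htr.
  exact (dir2_core HL Hrho Hh Hhx Uu Htr HLc HKU HK).
Qed.
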